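(* Let $G$ be a finite group with $Z(G)=I$, let $n\in\{2,3\}$, and let $(C_1,\dots,C_n,D)$ be a tuple of conjugacy classes of $G$ with $C_1,\dots,C_n$ non-trivial and $D$ either a class of involutions or the trivial class $\{\iota\}$. For $[\underline{\sigma}]=[\sigma_1,\dots,\sigma_n,\sigma_{n+1}]\in\Sigma^i(C_1,\dots,C_n,D)$ put $[\widehat{\underline{\sigma}}]=[\sigma_1,\dots,\sigma_n,\sigma_1,\dots,\sigma_n]\in\Sigma^i(C_1,\dots,C_n,C_1,\dots,C_n)$. If $[\underline{\sigma}],[\underline{\tau}]\in\Sigma^i(C_1,\dots,C_n,D)$ and $[\underline{\tau}]\in[\underline{\sigma}]^{B_{n+1}}$, then $[\widehat{\underline{\tau}}]\in[\widehat{\underline{\sigma}}]^{B_{2n}}$.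
   Context: $\iota$ is the identity and $I$ the trivial group. For conjugacy classes $C_1,\dots,C_m$ (here the trivial class is allowed), $\Sigma^i(C_1,\dots,C_m)$ is the set of $G$-conjugacy classes $[\sigma_1,\dots,\sigma_m]$ (simultaneous conjugation) of tuples with $\sigma_j\in C_j$, $\langle\sigma_1,\dots,\sigma_m\rangle=G$, $\sigma_1\cdots\sigma_m=\iota$. The Hurwitz braid group $H_m$ is generated by $\beta_2,\dots,\beta_m$ and acts from the right by $[\underline{\sigma}]^{\beta_i}=[\sigma_1,\dots,\sigma_{i-2},\sigma_{i-1}\sigma_i\sigma_{i-1}^{-1},\sigma_{i-1},\sigma_{i+1},\dots,\sigma_m]$; the pure braid group $B_m$ is the subgroup generated by $\beta_{ij}=\beta_{i+1}^{-1}\cdots\beta_{j-1}^{-1}\beta_j^2\beta_{j-1}\cdots\beta_{i+1}$, $1\le i<j\le m$, and preserves each $\Sigma^i(C_1,\dots,C_m)$. $X^{B_m}$ denotes the $B_m$-orbit of $X$. *)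

(* Defs.v *)
From mathcomp Require Import all_boot all_fingroup all_solvable.
Set Implicit Arguments. Unset Strict Implicit. Unset Printing Implicit Defensive.
Local Open Scope group_scope.

Section Hurwitz.
Variable gT : finGroupType.

(* Action of the Hurwitz braid generator beta_i (1-based, 2 <= i <= m) on a
   tuple (s_1,...,s_m), from the right:
   (.., s_{i-1}, s_i, ..) |-> (.., s_{i-1} s_i s_{i-1}^-1, s_{i-1}, ..).
   Note: in mathcomp x ^ y = y^-1 * x * y, so s_{i-1} s_i s_{i-1}^-1
   is s_i ^ s_{i-1}^-1.  Positions i-1, i (1-based) are i.-2, i.-1 (0-based). *)
Definition hurw (i : nat) (s : seq gT) : seq gT :=
  [seq if k == i.-2 then (nth 1 s i.-1) ^ (nth 1 s i.-2)^-1
       else if k == i.-1 then nth 1 s i.-2 else nth 1 s k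
  | k <- iota 0 (size s)].

Definition hurw_inv (i : nat) (s : seq gT) : seq gT :=
  [seq if k == i.-2 then nth 1 s i.-1
       else if k == i.-1 then (nth 1 s i.-2) ^ (nth 1 s i.-1) else nth 1 s k
  | k <- iota 0 (size s)].

(* Right action of the pure braid generator
   beta_ij = beta_{i+1}^-1 ... beta_{j-1}^-1 beta_j^2 beta_{j-1} ... beta_{i+1}
   (the leftmost factor acts first, since the action is a right action). *)
Definition pbraid (i j : nat) (s : seq gT) : seq gT :=
  let ks := iota i.+1 (j.-1 - i) in
  let s1 := foldl (fun s k => hurw_inv k s) s ks in
  let s2 := hurw j (hurw j s1) in
  foldl (fun s k => hurw k s) s2 (rev ks).

Definition pbraid_inv (i j : nat) (s : seq gT) : seq gT :=
  let ks := iota i.+1 (j.-1 - i) in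
  let s1 := foldl (fun s k => hurw_inv k s) s ks in
  let s2 := hurw_inv j (hurw_inv j s1) in
  foldl (fun s k => hurw k s) s2 (rev ks).

(* pure_orbit G m s t : the class [t] lies in the B_m-orbit of the class [s],
   where classes are taken modulo simultaneous conjugation by G. *)
Inductive pure_orbit (G : {group gT}) (m : nat) (s : seq gT) : seq gT -> Prop :=
| po_refl : pure_orbit G m s s
| po_conj t g : g \in G -> pure_orbit G m s t ->
    pure_orbit G m s [seq x ^ g | x <- t]
| po_braid t i j : 1 <= i -> i < j -> j <= m -> pure_orbit G m s t ->
    pure_orbit G m s (pbraid i j t)
| po_braid_inv t i j : 1 <= i -> i < j -> j <= m -> pure_orbit G m s t ->
    pure_orbit G m s (pbraid_inv i j t).

Definition in_Sigma (G : {group gT}) (Cs : seq {set gT}) (s : seq gT) : Prop :=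
  [/\ size s = size Cs,
      forall k, k < size s -> nth 1 s k \in nth set0 Cs k,
      <<[set x in s]>> = G
    & \prod_(x <- s) x = 1].

End Hurwitz.

(* Main.v *)
Require Import Defs.
From mathcomp Require Import all_boot all_fingroup all_solvable.
Local Open Scope group_scope.

Ltac gnorm := rewrite ?conjgE ?invMg ?invgK ?mulgA;
  rewrite ?(mulgK, mulgKV, mulgV, mulVg, mul1g, mulg1, invg1).

Ltac ing := repeat first [ assumption | rewrite groupV | apply: groupM | apply: groupJ ].

Section S.
Variable gT : finGroupType.
Variable G : {group gT}.

Lemma pb_3_1_2 (x1 x2 x3 : gT) : pbraid 1 2 [:: x1; x2; x3] = [:: (x1 ^ ((x2 ^ (x1)^-1))^-1); (x2 ^ (x1)^-1); x3].
Proof. by []. Qed.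

Lemma pbi_3_1_2 (x1 x2 x3 : gT) : pbraid_inv 1 2 [:: x1; x2; x3] = [:: (x1 ^ x2); (x2 ^ (x1 ^ x2)); x3].
Proof. by []. Qed.

Lemma pb_3_1_3 (x1 x2 x3 : gT) : pbraid 1 3 [:: x1; x2; x3] = [:: (((x1 ^ x2) ^ ((x3 ^ ((x1 ^ x2))^-1))^-1) ^ (x2)^-1); x2; (x3 ^ ((x1 ^ x2))^-1)].
Proof. by []. Qed.

Lemma pbi_3_1_3 (x1 x2 x3 : gT) : pbraid_inv 1 3 [:: x1; x2; x3] = [:: (((x1 ^ x2) ^ x3) ^ (x2)^-1); x2; (x3 ^ ((x1 ^ x2) ^ x3))].
Proof. by []. Qed.

Lemma pb_3_2_3 (x1 x2 x3 : gT) : pbraid 2 3 [:: x1; x2; x3] = [:: x1; (x2 ^ ((x3 ^ (x2)^-1))^-1); (x3 ^ (x2)^-1)].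
Proof. by []. Qed.

Lemma pbi_3_2_3 (x1 x2 x3 : gT) : pbraid_inv 2 3 [:: x1; x2; x3] = [:: x1; (x2 ^ x3); (x3 ^ (x2 ^ x3))].
Proof. by []. Qed.

Lemma pb_4_1_2 (x1 x2 x3 x4 : gT) : pbraid 1 2 [:: x1; x2; x3; x4] = [:: (x1 ^ ((x2 ^ (x1)^-1))^-1); (x2 ^ (x1)^-1); x3; x4].
Proof. by []. Qed.

Lemma pbi_4_1_2 (x1 x2 x3 x4 : gT) : pbraid_inv 1 2 [:: x1; x2; x3; x4] = [:: (x1 ^ x2); (x2 ^ (x1 ^ x2)); x3; x4].
Proof. by []. Qed.

Lemma pb_4_1_3 (x1 x2 x3 x4 : gT) : pbraid 1 3 [:: x1; x2; x3; x4] = [:: (((x1 ^ x2) ^ ((x3 ^ ((x1 ^ x2))^-1))^-1) ^ (x2)^-1); x2; (x3 ^ ((x1 ^ x2))^-1); x4].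
Proof. by []. Qed.

Lemma pbi_4_1_3 (x1 x2 x3 x4 : gT) : pbraid_inv 1 3 [:: x1; x2; x3; x4] = [:: (((x1 ^ x2) ^ x3) ^ (x2)^-1); x2; (x3 ^ ((x1 ^ x2) ^ x3)); x4].
Proof. by []. Qed.

Lemma pb_4_1_4 (x1 x2 x3 x4 : gT) : pbraid 1 4 [:: x1; x2; x3; x4] = [:: (((((x1 ^ x2) ^ x3) ^ ((x4 ^ (((x1 ^ x2) ^ x3))^-1))^-1) ^ (x3)^-1) ^ (x2)^-1); x2; x3; (x4 ^ (((x1 ^ x2) ^ x3))^-1)].
Proof. by []. Qed.

Lemma pbi_4_1_4 (x1 x2 x3 x4 : gT) : pbraid_inv 1 4 [:: x1; x2; x3; x4] = [:: (((((x1 ^ x2) ^ x3) ^ x4) ^ (x3)^-1) ^ (x2)^-1); x2; x3; (x4 ^ (((x1 ^ x2) ^ x3) ^ x4))].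
Proof. by []. Qed.

Lemma pb_4_2_3 (x1 x2 x3 x4 : gT) : pbraid 2 3 [:: x1; x2; x3; x4] = [:: x1; (x2 ^ ((x3 ^ (x2)^-1))^-1); (x3 ^ (x2)^-1); x4].
Proof. by []. Qed.

Lemma pbi_4_2_3 (x1 x2 x3 x4 : gT) : pbraid_inv 2 3 [:: x1; x2; x3; x4] = [:: x1; (x2 ^ x3); (x3 ^ (x2 ^ x3)); x4].
Proof. by []. Qed.

Lemma pb_4_2_4 (x1 x2 x3 x4 : gT) : pbraid 2 4 [:: x1; x2; x3; x4] = [:: x1; (((x2 ^ x3) ^ ((x4 ^ ((x2 ^ x3))^-1))^-1) ^ (x3)^-1); x3; (x4 ^ ((x2 ^ x3))^-1)].
Proof. by []. Qed.

Lemma pbi_4_2_4 (x1 x2 x3 x4 : gT) : pbraid_inv 2 4 [:: x1; x2; x3; x4] = [:: x1; (((x2 ^ x3) ^ x4) ^ (x3)^-1); x3; (x4 ^ ((x2 ^ x3) ^ x4))].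
Proof. by []. Qed.

Lemma pb_4_3_4 (x1 x2 x3 x4 : gT) : pbraid 3 4 [:: x1; x2; x3; x4] = [:: x1; x2; (x3 ^ ((x4 ^ (x3)^-1))^-1); (x4 ^ (x3)^-1)].
Proof. by []. Qed.

Lemma pbi_4_3_4 (x1 x2 x3 x4 : gT) : pbraid_inv 3 4 [:: x1; x2; x3; x4] = [:: x1; x2; (x3 ^ x4); (x4 ^ (x3 ^ x4))].
Proof. by []. Qed.

Lemma pb_6_1_2 (x1 x2 x3 x4 x5 x6 : gT) : pbraid 1 2 [:: x1; x2; x3; x4; x5; x6] = [:: (x1 ^ ((x2 ^ (x1)^-1))^-1); (x2 ^ (x1)^-1); x3; x4; x5; x6].
Proof. by []. Qed.

Lemma pbi_6_1_2 (x1 x2 x3 x4 x5 x6 : gT) : pbraid_inv 1 2 [:: x1; x2; x3; x4; x5; x6] = [:: (x1 ^ x2); (x2 ^ (x1 ^ x2)); x3; x4; x5; x6].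
Proof. by []. Qed.

Lemma pb_6_1_3 (x1 x2 x3 x4 x5 x6 : gT) : pbraid 1 3 [:: x1; x2; x3; x4; x5; x6] = [:: (((x1 ^ x2) ^ ((x3 ^ ((x1 ^ x2))^-1))^-1) ^ (x2)^-1); x2; (x3 ^ ((x1 ^ x2))^-1); x4; x5; x6].
Proof. by []. Qed.

Lemma pbi_6_1_3 (x1 x2 x3 x4 x5 x6 : gT) : pbraid_inv 1 3 [:: x1; x2; x3; x4; x5; x6] = [:: (((x1 ^ x2) ^ x3) ^ (x2)^-1); x2; (x3 ^ ((x1 ^ x2) ^ x3)); x4; x5; x6].
Proof. by []. Qed.

Lemma pb_6_1_4 (x1 x2 x3 x4 x5 x6 : gT) : pbraid 1 4 [:: x1; x2; x3; x4; x5; x6] = [:: (((((x1 ^ x2) ^ x3) ^ ((x4 ^ (((x1 ^ x2) ^ x3))^-1))^-1) ^ (x3)^-1) ^ (x2)^-1); x2; x3; (x4 ^ (((x1 ^ x2) ^ x3))^-1); x5; x6].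
Proof. by []. Qed.

Lemma pbi_6_1_4 (x1 x2 x3 x4 x5 x6 : gT) : pbraid_inv 1 4 [:: x1; x2; x3; x4; x5; x6] = [:: (((((x1 ^ x2) ^ x3) ^ x4) ^ (x3)^-1) ^ (x2)^-1); x2; x3; (x4 ^ (((x1 ^ x2) ^ x3) ^ x4)); x5; x6].
Proof. by []. Qed.

Lemma pb_6_1_5 (x1 x2 x3 x4 x5 x6 : gT) : pbraid 1 5 [:: x1; x2; x3; x4; x5; x6] = [:: (((((((x1 ^ x2) ^ x3) ^ x4) ^ ((x5 ^ ((((x1 ^ x2) ^ x3) ^ x4))^-1))^-1) ^ (x4)^-1) ^ (x3)^-1) ^ (x2)^-1); x2; x3; x4; (x5 ^ ((((x1 ^ x2) ^ x3) ^ x4))^-1); x6].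
Proof. by []. Qed.

Lemma pbi_6_1_5 (x1 x2 x3 x4 x5 x6 : gT) : pbraid_inv 1 5 [:: x1; x2; x3; x4; x5; x6] = [:: (((((((x1 ^ x2) ^ x3) ^ x4) ^ x5) ^ (x4)^-1) ^ (x3)^-1) ^ (x2)^-1); x2; x3; x4; (x5 ^ ((((x1 ^ x2) ^ x3) ^ x4) ^ x5)); x6].
Proof. by []. Qed.

Lemma pb_6_1_6 (x1 x2 x3 x4 x5 x6 : gT) : pbraid 1 6 [:: x1; x2; x3; x4; x5; x6] = [:: (((((((((x1 ^ x2) ^ x3) ^ x4) ^ x5) ^ ((x6 ^ (((((x1 ^ x2) ^ x3) ^ x4) ^ x5))^-1))^-1) ^ (x5)^-1) ^ (x4)^-1) ^ (x3)^-1) ^ (x2)^-1); x2; x3; x4; x5; (x6 ^ (((((x1 ^ x2) ^ x3) ^ x4) ^ x5))^-1)].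
Proof. by []. Qed.

Lemma pbi_6_1_6 (x1 x2 x3 x4 x5 x6 : gT) : pbraid_inv 1 6 [:: x1; x2; x3; x4; x5; x6] = [:: (((((((((x1 ^ x2) ^ x3) ^ x4) ^ x5) ^ x6) ^ (x5)^-1) ^ (x4)^-1) ^ (x3)^-1) ^ (x2)^-1); x2; x3; x4; x5; (x6 ^ (((((x1 ^ x2) ^ x3) ^ x4) ^ x5) ^ x6))].
Proof. by []. Qed.

Lemma pb_6_2_3 (x1 x2 x3 x4 x5 x6 : gT) : pbraid 2 3 [:: x1; x2; x3; x4; x5; x6] = [:: x1; (x2 ^ ((x3 ^ (x2)^-1))^-1); (x3 ^ (x2)^-1); x4; x5; x6].
Proof. by []. Qed.

Lemma pbi_6_2_3 (x1 x2 x3 x4 x5 x6 : gT) : pbraid_inv 2 3 [:: x1; x2; x3; x4; x5; x6] = [:: x1; (x2 ^ x3); (x3 ^ (x2 ^ x3)); x4; x5; x6].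
Proof. by []. Qed.

Lemma pb_6_2_4 (x1 x2 x3 x4 x5 x6 : gT) : pbraid 2 4 [:: x1; x2; x3; x4; x5; x6] = [:: x1; (((x2 ^ x3) ^ ((x4 ^ ((x2 ^ x3))^-1))^-1) ^ (x3)^-1); x3; (x4 ^ ((x2 ^ x3))^-1); x5; x6].
Proof. by []. Qed.

Lemma pbi_6_2_4 (x1 x2 x3 x4 x5 x6 : gT) : pbraid_inv 2 4 [:: x1; x2; x3; x4; x5; x6] = [:: x1; (((x2 ^ x3) ^ x4) ^ (x3)^-1); x3; (x4 ^ ((x2 ^ x3) ^ x4)); x5; x6].
Proof. by []. Qed.

Lemma pb_6_2_5 (x1 x2 x3 x4 x5 x6 : gT) : pbraid 2 5 [:: x1; x2; x3; x4; x5; x6] = [:: x1; (((((x2 ^ x3) ^ x4) ^ ((x5 ^ (((x2 ^ x3) ^ x4))^-1))^-1) ^ (x4)^-1) ^ (x3)^-1); x3; x4; (x5 ^ (((x2 ^ x3) ^ x4))^-1); x6].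
Proof. by []. Qed.

Lemma pbi_6_2_5 (x1 x2 x3 x4 x5 x6 : gT) : pbraid_inv 2 5 [:: x1; x2; x3; x4; x5; x6] = [:: x1; (((((x2 ^ x3) ^ x4) ^ x5) ^ (x4)^-1) ^ (x3)^-1); x3; x4; (x5 ^ (((x2 ^ x3) ^ x4) ^ x5)); x6].
Proof. by []. Qed.

Lemma pb_6_2_6 (x1 x2 x3 x4 x5 x6 : gT) : pbraid 2 6 [:: x1; x2; x3; x4; x5; x6] = [:: x1; (((((((x2 ^ x3) ^ x4) ^ x5) ^ ((x6 ^ ((((x2 ^ x3) ^ x4) ^ x5))^-1))^-1) ^ (x5)^-1) ^ (x4)^-1) ^ (x3)^-1); x3; x4; x5; (x6 ^ ((((x2 ^ x3) ^ x4) ^ x5))^-1)].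
Proof. by []. Qed.

Lemma pbi_6_2_6 (x1 x2 x3 x4 x5 x6 : gT) : pbraid_inv 2 6 [:: x1; x2; x3; x4; x5; x6] = [:: x1; (((((((x2 ^ x3) ^ x4) ^ x5) ^ x6) ^ (x5)^-1) ^ (x4)^-1) ^ (x3)^-1); x3; x4; x5; (x6 ^ ((((x2 ^ x3) ^ x4) ^ x5) ^ x6))].
Proof. by []. Qed.

Lemma pb_6_3_4 (x1 x2 x3 x4 x5 x6 : gT) : pbraid 3 4 [:: x1; x2; x3; x4; x5; x6] = [:: x1; x2; (x3 ^ ((x4 ^ (x3)^-1))^-1); (x4 ^ (x3)^-1); x5; x6].
Proof. by []. Qed.

Lemma pbi_6_3_4 (x1 x2 x3 x4 x5 x6 : gT) : pbraid_inv 3 4 [:: x1; x2; x3; x4; x5; x6] = [:: x1; x2; (x3 ^ x4); (x4 ^ (x3 ^ x4)); x5; x6].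
Proof. by []. Qed.

Lemma pb_6_3_5 (x1 x2 x3 x4 x5 x6 : gT) : pbraid 3 5 [:: x1; x2; x3; x4; x5; x6] = [:: x1; x2; (((x3 ^ x4) ^ ((x5 ^ ((x3 ^ x4))^-1))^-1) ^ (x4)^-1); x4; (x5 ^ ((x3 ^ x4))^-1); x6].
Proof. by []. Qed.

Lemma pbi_6_3_5 (x1 x2 x3 x4 x5 x6 : gT) : pbraid_inv 3 5 [:: x1; x2; x3; x4; x5; x6] = [:: x1; x2; (((x3 ^ x4) ^ x5) ^ (x4)^-1); x4; (x5 ^ ((x3 ^ x4) ^ x5)); x6].
Proof. by []. Qed.

Lemma pb_6_3_6 (x1 x2 x3 x4 x5 x6 : gT) : pbraid 3 6 [:: x1; x2; x3; x4; x5; x6] = [:: x1; x2; (((((x3 ^ x4) ^ x5) ^ ((x6 ^ (((x3 ^ x4) ^ x5))^-1))^-1) ^ (x5)^-1) ^ (x4)^-1); x4; x5; (x6 ^ (((x3 ^ x4) ^ x5))^-1)].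
Proof. by []. Qed.

Lemma pbi_6_3_6 (x1 x2 x3 x4 x5 x6 : gT) : pbraid_inv 3 6 [:: x1; x2; x3; x4; x5; x6] = [:: x1; x2; (((((x3 ^ x4) ^ x5) ^ x6) ^ (x5)^-1) ^ (x4)^-1); x4; x5; (x6 ^ (((x3 ^ x4) ^ x5) ^ x6))].
Proof. by []. Qed.

Lemma pb_6_4_5 (x1 x2 x3 x4 x5 x6 : gT) : pbraid 4 5 [:: x1; x2; x3; x4; x5; x6] = [:: x1; x2; x3; (x4 ^ ((x5 ^ (x4)^-1))^-1); (x5 ^ (x4)^-1); x6].
Proof. by []. Qed.

Lemma pbi_6_4_5 (x1 x2 x3 x4 x5 x6 : gT) : pbraid_inv 4 5 [:: x1; x2; x3; x4; x5; x6] = [:: x1; x2; x3; (x4 ^ x5); (x5 ^ (x4 ^ x5)); x6].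
Proof. by []. Qed.

Lemma pb_6_4_6 (x1 x2 x3 x4 x5 x6 : gT) : pbraid 4 6 [:: x1; x2; x3; x4; x5; x6] = [:: x1; x2; x3; (((x4 ^ x5) ^ ((x6 ^ ((x4 ^ x5))^-1))^-1) ^ (x5)^-1); x5; (x6 ^ ((x4 ^ x5))^-1)].
Proof. by []. Qed.

Lemma pbi_6_4_6 (x1 x2 x3 x4 x5 x6 : gT) : pbraid_inv 4 6 [:: x1; x2; x3; x4; x5; x6] = [:: x1; x2; x3; (((x4 ^ x5) ^ x6) ^ (x5)^-1); x5; (x6 ^ ((x4 ^ x5) ^ x6))].
Proof. by []. Qed.

Lemma pb_6_5_6 (x1 x2 x3 x4 x5 x6 : gT) : pbraid 5 6 [:: x1; x2; x3; x4; x5; x6] = [:: x1; x2; x3; x4; (x5 ^ ((x6 ^ (x5)^-1))^-1); (x6 ^ (x5)^-1)].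
Proof. by []. Qed.

Lemma pbi_6_5_6 (x1 x2 x3 x4 x5 x6 : gT) : pbraid_inv 5 6 [:: x1; x2; x3; x4; x5; x6] = [:: x1; x2; x3; x4; (x5 ^ x6); (x6 ^ (x5 ^ x6))].
Proof. by []. Qed.

Definition pbE := (pb_3_1_2, pbi_3_1_2, pb_3_1_3, pbi_3_1_3, pb_3_2_3, pbi_3_2_3, pb_4_1_2, pbi_4_1_2, pb_4_1_3, pbi_4_1_3, pb_4_1_4, pbi_4_1_4, pb_4_2_3, pbi_4_2_3, pb_4_2_4, pbi_4_2_4, pb_4_3_4, pbi_4_3_4, pb_6_1_2, pbi_6_1_2, pb_6_1_3, pbi_6_1_3, pb_6_1_4, pbi_6_1_4, pb_6_1_5, pbi_6_1_5, pb_6_1_6, pbi_6_1_6, pb_6_2_3, pbi_6_2_3, pb_6_2_4, pbi_6_2_4, pb_6_2_5, pbi_6_2_5, pb_6_2_6, pbi_6_2_6, pb_6_3_4, pbi_6_3_4, pb_6_3_5, pbi_6_3_5, pb_6_3_6, pbi_6_3_6, pb_6_4_5, pbi_6_4_5, pb_6_4_6, pbi_6_4_6, pb_6_5_6, pbi_6_5_6).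

Definition T3 (a b c : gT) := [:: a; b; c; (a * b * c)^-1].
Definition D3 (a b c : gT) := [:: a; b; c; a; b; c].
Definition T2 (a b : gT) := [:: a; b; (a * b)^-1].
Definition D2 (a b : gT) := [:: a; b; a; b].

Ltac solve_eq := rewrite /T3 /D3 /T2 /D2 ?pbE /=;
  repeat (congr (_ :: _)); gnorm; done.

Ltac go3 P X := exists (nth 1 P 0), (nth 1 P 1), (nth 1 P 2); split;
  [ rewrite /T3; solve_eq
  | split; [ split; rewrite /T3 /T2 ?pbE /=; ing
           | have -> : D3 (nth 1 P 0) (nth 1 P 1) (nth 1 P 2) = X by rewrite /D3; solve_eq ] ].

Ltac go2 P X := exists (nth 1 P 0), (nth 1 P 1); split;
  [ rewrite /T2; solve_eq
  | split; [ split; rewrite /T3 /T2 ?pbE /=; ing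
           | have -> : D2 (nth 1 P 0) (nth 1 P 1) = X by rewrite /D2; solve_eq ] ].

Lemma step3 (S : seq gT) a b c i j : (1 <= i)%N -> (i < j)%N -> (j <= 4)%N ->
  a \in G -> b \in G -> c \in G -> pure_orbit G 6 S (D3 a b c) ->
  (exists a' b' c', pbraid i j (T3 a b c) = T3 a' b' c' /\
     [/\ a' \in G, b' \in G & c' \in G] /\ pure_orbit G 6 S (D3 a' b' c')) /\
  (exists a' b' c', pbraid_inv i j (T3 a b c) = T3 a' b' c' /\
     [/\ a' \in G, b' \in G & c' \in G] /\ pure_orbit G 6 S (D3 a' b' c')).
Proof.
move=> Hi Hij Hj Ha Hb Hc HO.
case: i Hi Hij => [|[|[|[|i]]]] // _; case: j Hj => [|[|[|[|[|j]]]]] // _ _.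
- split.
  + go3 (pbraid 1 2 (T3 a b c)) (pbraid 4 5 (pbraid 1 2 (D3 a b c))).
    by do 2 apply: po_braid => //.
  + go3 (pbraid_inv 1 2 (T3 a b c)) (pbraid_inv 4 5 (pbraid_inv 1 2 (D3 a b c))).
    by do 2 apply: po_braid_inv => //.
- split.
  + go3 (pbraid 1 3 (T3 a b c)) (pbraid 4 6 (pbraid 1 3 (D3 a b c))).
    by do 2 apply: po_braid => //.
  + go3 (pbraid_inv 1 3 (T3 a b c)) (pbraid_inv 4 6 (pbraid_inv 1 3 (D3 a b c))).
    by do 2 apply: po_braid_inv => //.
- split.
  + go3 (pbraid 1 4 (T3 a b c)) [seq x ^ (b * c) | x <- pbraid 5 6 (pbraid 2 3 (D3 a b c))].
    apply: po_conj; first by ing.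
    by do 2 apply: po_braid => //.
  + go3 (pbraid_inv 1 4 (T3 a b c)) [seq x ^ (c^-1 * b^-1) | x <- pbraid_inv 5 6 (pbraid_inv 2 3 (D3 a b c))].
    apply: po_conj; first by ing.
    by do 2 apply: po_braid_inv => //.
- split.
  + go3 (pbraid 2 3 (T3 a b c)) (pbraid 5 6 (pbraid 2 3 (D3 a b c))).
    by do 2 apply: po_braid => //.
  + go3 (pbraid_inv 2 3 (T3 a b c)) (pbraid_inv 5 6 (pbraid_inv 2 3 (D3 a b c))).
    by do 2 apply: po_braid_inv => //.
- split.
  + go3 (pbraid 2 4 (T3 a b c)) [seq x ^ (c^-1 * b^-1 * c) | x <- pbraid_inv 4 5 (pbraid_inv 1 2 (pbraid_inv 5 6 (pbraid_inv 2 3 (D3 a b c))))].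
    apply: po_conj; first by ing.
    by do 4 apply: po_braid_inv => //.
  + go3 (pbraid_inv 2 4 (T3 a b c)) [seq x ^ (a * b * a^-1) | x <- pbraid 5 6 (pbraid 2 3 (pbraid 4 5 (pbraid 1 2 (D3 a b c))))].
    apply: po_conj; first by ing.
    by do 4 apply: po_braid => //.
- split.
  + go3 (pbraid 3 4 (T3 a b c)) [seq x ^ (a * b) | x <- pbraid 4 5 (pbraid 1 2 (D3 a b c))].
    apply: po_conj; first by ing.
    by do 2 apply: po_braid => //.
  + go3 (pbraid_inv 3 4 (T3 a b c)) [seq x ^ (b^-1 * a^-1) | x <- pbraid_inv 4 5 (pbraid_inv 1 2 (D3 a b c))].
    apply: po_conj; first by ing.
    by do 2 apply: po_braid_inv => //.
Qed.


Lemma step2 (S : seq gT) a b i j : (1 <= i)%N -> (i < j)%N -> (j <= 3)%N ->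
  a \in G -> b \in G -> pure_orbit G 4 S (D2 a b) ->
  (exists a' b', pbraid i j (T2 a b) = T2 a' b' /\
     (a' \in G /\ b' \in G) /\ pure_orbit G 4 S (D2 a' b')) /\
  (exists a' b', pbraid_inv i j (T2 a b) = T2 a' b' /\
     (a' \in G /\ b' \in G) /\ pure_orbit G 4 S (D2 a' b')).
Proof.
move=> Hi Hij Hj Ha Hb HO.
case: i Hi Hij => [|[|[|i]]] // _; case: j Hj => [|[|[|[|j]]]] // _ _.
- split.
  + go2 (pbraid 1 2 (T2 a b)) (pbraid 3 4 (pbraid 1 2 (D2 a b))).
    by do 2 apply: po_braid => //.
  + go2 (pbraid_inv 1 2 (T2 a b)) (pbraid_inv 3 4 (pbraid_inv 1 2 (D2 a b))).
    by do 2 apply: po_braid_inv => //.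
- split.
  + go2 (pbraid 1 3 (T2 a b)) [seq x ^ b | x <- D2 a b].
    by apply: po_conj.
  + go2 (pbraid_inv 1 3 (T2 a b)) [seq x ^ b^-1 | x <- D2 a b].
    by apply: po_conj; rewrite ?groupV.
- split.
  + go2 (pbraid 2 3 (T2 a b)) [seq x ^ a | x <- D2 a b].
    by apply: po_conj.
  + go2 (pbraid_inv 2 3 (T2 a b)) [seq x ^ a^-1 | x <- D2 a b].
    by apply: po_conj; rewrite ?groupV.
Qed.

Lemma main3 (t : seq gT) a b c : a \in G -> b \in G -> c \in G ->
  pure_orbit G 4 (T3 a b c) t ->
  exists a' b' c', t = T3 a' b' c' /\
     [/\ a' \in G, b' \in G & c' \in G] /\ pure_orbit G 6 (D3 a b c) (D3 a' b' c').
Proof.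
move=> Ha Hb Hc; elim.
- by exists a, b, c; split => //; split => //; apply: po_refl.
- move=> t0 g Hg _ [a' [b' [c' [-> [[Ha' Hb' Hc'] HO]]]]].
  exists (a' ^ g), (b' ^ g), (c' ^ g); split.
    rewrite /T3 /=; repeat (congr (_ :: _)); gnorm; done.
  split; first by split; rewrite groupJ.
  have -> : D3 (a' ^ g) (b' ^ g) (c' ^ g) = [seq x ^ g | x <- D3 a' b' c'] by [].
  exact: po_conj.
- move=> t0 i j Hi Hij Hj _ [a' [b' [c' [-> [[Ha' Hb' Hc'] HO]]]]].
  by have [] := step3 _ _ _ _ _ _ Hi Hij Hj Ha' Hb' Hc' HO.
- move=> t0 i j Hi Hij Hj _ [a' [b' [c' [-> [[Ha' Hb' Hc'] HO]]]]].
  by have [] := step3 _ _ _ _ _ _ Hi Hij Hj Ha' Hb' Hc' HO.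
Qed.

Lemma main2 (t : seq gT) a b : a \in G -> b \in G ->
  pure_orbit G 3 (T2 a b) t ->
  exists a' b', t = T2 a' b' /\
     (a' \in G /\ b' \in G) /\ pure_orbit G 4 (D2 a b) (D2 a' b').
Proof.
move=> Ha Hb; elim.
- by exists a, b; split => //; split => //; apply: po_refl.
- move=> t0 g Hg _ [a' [b' [-> [[Ha' Hb'] HO]]]].
  exists (a' ^ g), (b' ^ g); split.
    rewrite /T2 /=; repeat (congr (_ :: _)); gnorm; done.
  split; first by split; rewrite groupJ.
  have -> : D2 (a' ^ g) (b' ^ g) = [seq x ^ g | x <- D2 a' b'] by [].
  exact: po_conj.
- move=> t0 i j Hi Hij Hj _ [a' [b' [-> [[Ha' Hb'] HO]]]].
  by have [] := step2 _ _ _ _ _ Hi Hij Hj Ha' Hb' HO.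
- move=> t0 i j Hi Hij Hj _ [a' [b' [-> [[Ha' Hb'] HO]]]].
  by have [] := step2 _ _ _ _ _ Hi Hij Hj Ha' Hb' HO.
Qed.

End S.

Theorem proposition10 (gT : finGroupType) (G : {group gT}) (n : nat)
    (Cs : seq {set gT}) (D : {set gT}) (s t : seq gT) :
  'Z(G) = 1 ->
  (n = 2 \/ n = 3)%N ->
  size Cs = n ->
  (forall C, C \in Cs -> C \in classes G /\ C != 1) ->
  D \in classes G ->
  (forall x, x \in D -> x ^+ 2 = 1) ->
  in_Sigma G (rcons Cs D) s ->
  in_Sigma G (rcons Cs D) t ->
  pure_orbit G n.+1 s t ->
  pure_orbit G (2 * n)%N (take n s ++ take n s) (take n t ++ take n t).
Proof.
move=> _ Hn HCs _ _ _ [Hsz _ Hgen Hprod] _ HO.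
rewrite size_rcons HCs in Hsz.
have inG : forall x, x \in s -> x \in G.
  by move=> x Hx; rewrite -Hgen mem_gen // inE.
clear Hgen; case: Hn => En; rewrite {}En in Hsz HO *.
- case: s Hsz inG Hprod HO => [|a [|b [|d [|? ?]]]] // _ inG Hprod HO.
  rewrite !big_cons big_nil mulg1 in Hprod.
  have Ed : d = (a * b)^-1.
    by apply/eqP; rewrite eq_sym eq_invg_mul -mulgA Hprod.
  subst d.
  have Ha : a \in G by apply: inG; rewrite !inE eqxx.
  have Hb : b \in G by apply: inG; rewrite !inE eqxx ?orbT.
  have [a' [b' [Et [_ O]]]] := @main2 gT G _ a b Ha Hb HO.
  by rewrite Et.
- case: s Hsz inG Hprod HO => [|a [|b [|c [|d [|? ?]]]]] // _ inG Hprod HO.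
  rewrite !big_cons big_nil mulg1 in Hprod.
  have Ed : d = (a * b * c)^-1.
    by apply/eqP; rewrite eq_sym eq_invg_mul -!mulgA Hprod.
  subst d.
  have Ha : a \in G by apply: inG; rewrite !inE eqxx.
  have Hb : b \in G by apply: inG; rewrite !inE eqxx ?orbT.
  have Hc : c \in G by apply: inG; rewrite !inE eqxx ?orbT.
  have [a' [b' [c' [Et [_ O]]]]] := @main3 gT G _ a b c Ha Hb Hc HO.
  by rewrite Et.
Qed.
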